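(* Let $H$ be a graph with at least one edge and no isolated vertices, and suppose $H$ is not isomorphic to a star $K_{1,m}$ for any $m\ge1$. Let $t\ge1$, and let $C$ be the graph obtained from $\mu_t(H)$ by adding $\ell\ge1$ new vertices, each adjacent only to the root $w$. Then $\det(C)=\det(\mu_t(H))+\ell-1$.
   Context: All graphs are finite and simple. For a graph $G$ with $V(G)=\{v_1,\dots,v_n\}$ and an integer $t\ge1$, the generalized Mycielskian $\mu_t(G)$ has vertex set $\{u_i^s: 1\le i\le n,\ 0\le s\le t\}\cup\{w\}$, where $u_i^0$ is identified with $v_i$. Its edges are: $u_i^0u_j^0$ for each edge $v_iv_j$ of $G$; $u_i^su_j^{s+1}$ and $u_j^su_i^{s+1}$ for each edge $v_iv_j$ of $G$ and each $0\le s<t$; and $u_i^tw$ for all $1\le i\le n$; $w$ is the root. A set $S\subseteq V(G)$ is a determining set for $G$ if the only automorphism of $G$ fixing every vertex of $S$ is the identity; $\det(G)$ is the minimum size of a determining set. *)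

(* Defs.v *)
From mathcomp Require Import all_boot all_fingroup.
Set Implicit Arguments. Unset Strict Implicit. Unset Printing Implicit Defensive.

Definition simple_graph (V : finType) (e : rel V) : Prop :=
  symmetric e /\ irreflexive e.

Definition is_aut (V : finType) (e : rel V) (f : {perm V}) : bool :=
  [forall x, forall y, e (f x) (f y) == e x y].

Definition determining (V : finType) (e : rel V) (S : {set V}) : bool :=
  [forall f : {perm V}, (is_aut e f && [forall x in S, f x == x]) ==> (f == 1%g)].

Lemma determining_exists (V : finType) (e : rel V) :
  exists n, [exists S : {set V}, (#|S| == n) && determining e S].
Proof.
exists #|[set: V]|; apply/existsP; exists [set: V]; rewrite eqxx /=.
apply/forallP => f; apply/implyP => /andP [_ /forallP H]; apply/eqP/permP => x.
by rewrite perm1; apply/eqP; have := H x; rewrite in_setT.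
Qed.

Definition det_num (V : finType) (e : rel V) : nat := ex_minn (determining_exists e).

Definition isomorphic (V V' : finType) (e : rel V) (e' : rel V') : Prop :=
  exists f : V -> V', bijective f /\ forall x y, e' (f x) (f y) = e x y.

(* The star K_{1,m}: centre None, leaves Some i, i < m. *)
Definition star_rel (m : nat) : rel (option 'I_m) :=
  fun x y => (x == None) (+) (y == None).

(* Generalized Mycielskian mu_t(G): vertex Some (v_i, s) is u_i^s (s = 0..t), None is the root w. *)
Definition myc_rel (T : finType) (e : rel T) (t : nat) : rel (option (T * 'I_t.+1)) :=
  fun x y =>
    match x, y with
    | Some (i, s), Some (j, r) =>
        e i j && (((nat_of_ord s == 0) && (nat_of_ord r == 0))
                  || (nat_of_ord r == s.+1) || (nat_of_ord s == r.+1))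
    | Some (_, s), None => nat_of_ord s == t
    | None, Some (_, r) => nat_of_ord r == t
    | None, None => false
    end.

Arguments myc_rel {T} e t.

Definition myc_pendant_rel (T : finType) (e : rel T) (t l : nat)
  : rel (option (T * 'I_t.+1) + 'I_l) :=
  fun x y =>
    match x, y with
    | inl a, inl b => myc_rel e t a b
    | inl a, inr _ => a == None
    | inr _, inl b => b == None
    | inr _, inr _ => false
    end.

Arguments myc_pendant_rel {T} e t l.
Arguments star_rel m : clear implicits.

(* Main.v *)
Require Import Defs.
From mathcomp Require Import all_boot all_fingroup.
From mathcomp Require Import zify.
Set Implicit Arguments. Unset Strict Implicit. Unset Printing Implicit Defensive.


Section Generic.
Variables (X : finType) (E : rel X).
Definition nb (a : X) : {set X} := [set y | E a y].
Definition n2 (a : X) : {set X} :=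
  [set y | (y != a) && ~~ E a y && [exists z, E a z && E z y]].

Variable f : {perm X}.
Hypothesis fE : forall a b, E (f a) (f b) = E a b.

Lemma memf (A : {set X}) y : (y \in f @: A) = (f^-1%g y \in A).
Proof.
by rewrite -{1}(permKV f y) mem_imset //; apply: perm_inj.
Qed.

Lemma nbf a : nb (f a) = f @: nb a.
Proof. by apply/setP => y; rewrite memf !inE -{1}(permKV f y) fE. Qed.

Lemma n2f a : n2 (f a) = f @: n2 a.
Proof.
apply/setP => y; rewrite memf !inE -{1 2 3}(permKV f y) fE (inj_eq perm_inj).
congr (_ && _); apply/existsP/existsP => [[z Hz]|[z Hz]].
  exists (f^-1%g z); rewrite -(fE a (f^-1%g z)) -(fE (f^-1%g z) (f^-1%g y)) !permKV; by rewrite permKV in Hz.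
by exists (f z); rewrite !fE.
Qed.

Lemma card_nbf a : #|nb (f a)| = #|nb a|.
Proof. by rewrite nbf card_imset //; apply: perm_inj. Qed.

Lemma card_nbIf a b : #|nb (f a) :&: nb (f b)| = #|nb a :&: nb b|.
Proof.
rewrite !nbf -imsetI ?card_imset //; [apply: perm_inj| move=> ? ? _ _; apply: perm_inj].
Qed.

Lemma card_n2f a : #|n2 (f a)| = #|n2 a|.
Proof. by rewrite n2f card_imset //; apply: perm_inj. Qed.
End Generic.

Section S. Variables (X : finType) (P : pred (option X)).
Lemma card_opt :
  #|[set y | P y]| = P None + #|[set z | P (Some z)]|.
Proof.
set B := [set z | P (Some z)].
have nS : None \notin Some @: B by apply/imsetP => -[z' _].
have -> : [set y | P y] = if P None then None |: (Some @: B) else Some @: B.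
  apply/setP => y; case: y => [z|]; case hN: (P None) => //=;
  rewrite ?inE ?mem_imset ?inE ?hN //; try (by move=> ? ? []); by rewrite (negbTE nS).
case: (P None) => /=; rewrite ?cardsU1 ?nS card_imset //; by move=> ? ? [].
Qed.
End S.


Section Myc.
Variables (T : finType) (e : rel T) (t : nat).
Local Notation V := (option (T * 'I_t.+1)).
Local Notation E := (myc_rel e t).

Definition Rrel (s r : nat) : bool := ((s == 0) && (r == 0)) || (r == s.+1) || (s == r.+1).
Definition Rs (s : nat) : {set 'I_t.+1} := [set r : 'I_t.+1 | Rrel s r].
Definition nbH (i : T) : {set T} := [set j | e i j].

Lemma E_SS i s k r : E (Some (i,s)) (Some (k,r)) = e i k && Rrel s r.
Proof. by []. Qed.
Lemma E_SN i (s : 'I_t.+1) : E (Some (i,s)) None = (s == t :> nat).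
Proof. by []. Qed.
Lemma E_NS i (s : 'I_t.+1) : E None (Some (i,s)) = (s == t :> nat).
Proof. by []. Qed.
Lemma E_NN : E None None = false.
Proof. by []. Qed.

Lemma cardSS i s k r :
  #|nb E (Some (i,s)) :&: nb E (Some (k,r))| =
  ((s == t :> nat) && (r == t :> nat)) + #|nbH i :&: nbH k| * #|Rs s :&: Rs r|.
Proof.
have -> : nb E (Some (i,s)) :&: nb E (Some (k,r)) =
   [set y | E (Some (i,s)) y && E (Some (k,r)) y] by apply/setP => y; rewrite !inE.
rewrite card_opt /= -cardsX; congr (_ + _).
by apply: eq_card => -[j q]; rewrite !inE /= andbACA.
Qed.

Lemma cardS i s :
  #|nb E (Some (i,s))| = (s == t :> nat) + #|nbH i| * #|Rs s|.
Proof. by rewrite -[nb _ _]setIid cardSS !setIid andbb. Qed.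

Lemma eq_inord v (r : 'I_t.+1) : v < t.+1 -> (r == inord v) = (nat_of_ord r == v).
Proof. by move=> hv; rewrite -val_eqE /= inordK. Qed.

Hypothesis t1 : 1 <= t.

Lemma Rs_lt s : s < t -> #|Rs s| = 2.
Proof.
move=> st.
have -> : Rs s = [set inord s.+1; inord s.-1].
  by apply/setP => r; rewrite !inE !eq_inord /Rrel; lia.
by rewrite cards2 -val_eqE /= !inordK; lia.
Qed.

Lemma Rs_t : #|Rs t| = 1.
Proof.
have -> : Rs t = [set inord t.-1].
  by apply/setP => r; rewrite !inE !eq_inord /Rrel; have := ltn_ord r; lia.
by rewrite cards1.
Qed.

Lemma Rs_m2 s : 1 <= s < t -> #|Rs (s - 2) :&: Rs s| = 1.
Proof.
move=> st.
have -> : Rs (s - 2) :&: Rs s = [set inord s.-1].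
  by apply/setP => r; rewrite !inE !eq_inord /Rrel; lia.
by rewrite cards1.
Qed.

Lemma Rs_10 : #|Rs 1 :&: Rs 0| = 1.
Proof.
have -> : Rs 1 :&: Rs 0 = [set inord 0].
  by apply/setP => r; rewrite !inE !eq_inord /Rrel; lia.
by rewrite cards1.
Qed.

Lemma Rs_t0 : t = 1 -> #|Rs t :&: Rs 0| = 1.
Proof.
move=> ht.
have -> : Rs t :&: Rs 0 = [set inord 0].
  by apply/setP => r; rewrite !inE !eq_inord /Rrel; lia.
by rewrite cards1.
Qed.

Lemma Rs_tt : #|Rs t :&: Rs t| = 1.
Proof. by rewrite setIid Rs_t. Qed.

Hypothesis esym : symmetric e.
Hypothesis eirr : irreflexive e.
Hypothesis noiso : forall x, exists y, e x y.

Lemma w1 : #|nb E None| = #|T|.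
Proof.
rewrite /nb card_opt /= -[#|T|]muln1 -cardsT -(cards1 (@ord_max t)) -cardsX.
by apply: eq_card => -[j q]; rewrite !inE /= -val_eqE.
Qed.

Lemma w2 a b : E None a -> E None b -> ~~ E a b.
Proof.
case: a => [[j r]|] //; case: b => [[k q]|] //= /eqP hr /eqP hq.
by rewrite /Rrel hr hq; apply/negP; lia.
Qed.

Lemma w3 y : y != None -> ~~ E None y -> (exists z, E None z && E z y) ->
  #|nb E y| = 2 * #|nb E y :&: nb E None|.
Proof.
case: y => [[k q]|] // _ /= hq [[[j r]|] //= /andP [/eqP hr /andP [_ hR]]].
have qt : q = t.-1 :> nat by move: hR; rewrite /Rrel hr; have := ltn_ord q; lia.
rewrite cardS Rs_lt; last by lia.
have -> : nb E (Some (k, q)) :&: nb E None =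
   [set y | E (Some (k,q)) y && E None y] by apply/setP => y; rewrite !inE.
rewrite card_opt /=.
have -> : [set z | E (Some (k, q)) (Some z) && E None (Some z)] =
   setX (nbH k) [set @ord_max t].
  apply/setP => [[j' r']]; rewrite !inE /= -val_eqE /= /Rrel qt.
  have := ltn_ord r'; case: (e k j') => //=; lia.
rewrite cardsX cards1 /= (negbTE hq); lia.
Qed.

Lemma w4 : #|n2 E None| = #|T|.
Proof.
have -> : n2 E None = [set y | if y is Some z then (nat_of_ord z.2 == t.-1) else false].
  apply/setP => [[[k q]|]]; rewrite !inE //=.
  apply/idP/idP.
    case/andP => hq /existsP [[[j r]|] //= /andP [/eqP hr /andP [_ hR]]].
    by move: hR hq; rewrite /Rrel hr; have := ltn_ord q; lia.
  move=> /eqP hq; have [j hj] := noiso k.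
  apply/andP; split; first by lia.
  apply/existsP; exists (Some (j, @ord_max t)); rewrite /= eqxx /= esym hj /Rrel /=; lia.
rewrite card_opt /= -[#|T|]muln1 -cardsT -(cards1 (inord t.-1 : 'I_t.+1)) -cardsX.
apply: eq_card => -[j q]; rewrite !inE /= eq_inord //; lia.
Qed.

End Myc.


Lemma star_iso (T : finType) (e : rel T) c :
  irreflexive e -> symmetric e -> (forall k, k != c -> e c k) ->
  (forall a b, e a b -> (a == c) || (b == c)) -> 2 <= #|T| ->
  isomorphic e (star_rel (#|T|.-1)).
Proof.
move=> irr sym hc hs hT.
set m := #|T|.-1.
have hc1 : #|T| = #|{: option 'I_m}| by rewrite card_option card_ord /m; lia.
pose f0 (x : T) : option 'I_m := enum_val (cast_ord hc1 (enum_rank x)).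
pose g0 (y : option 'I_m) : T := enum_val (cast_ord (esym hc1) (enum_rank y)).
have f0K : cancel f0 g0 by move=> x; rewrite /f0 /g0 enum_valK cast_ordK enum_rankK.
have g0K : cancel g0 f0 by move=> y; rewrite /f0 /g0 enum_valK cast_ordKV enum_rankK.
pose f x := tperm (f0 c) None (f0 x).
have fb : bijective f.
  exists (fun y => g0 (tperm (f0 c) None y)) => x; rewrite /f ?tpermK ?f0K //.
  by rewrite g0K tpermK.
have fN x : (f x == None) = (x == c).
  rewrite -(tpermL (f0 c) None) /f (inj_eq (@perm_inj _ (tperm (f0 c) None))).
  by rewrite (inj_eq (can_inj f0K)).
exists f; split => // x y.
rewrite /star_rel !fN.
have [->|xc] := eqVneq x c.
  have [->|yc] := eqVneq y c; first by rewrite irr.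
  by rewrite hc.
have [->|yc] := eqVneq y c; first by rewrite sym hc.
apply/esym/negP => /hs; by rewrite (negbTE xc) (negbTE yc).
Qed.


Lemma card3 (X : finType) (a b c : X) : #|[set a; b; c]| <= 3.
Proof. rewrite !cardsU !cards1; lia. Qed.

Section Fix.
Variables (T : finType) (e : rel T) (t : nat).
Local Notation V := (option (T * 'I_t.+1)).
Local Notation E := (myc_rel e t).
Hypothesis t1 : 1 <= t.
Hypothesis esym : symmetric e.
Hypothesis eirr : irreflexive e.
Hypothesis noiso : forall x, exists y, e x y.
Hypothesis hedge : exists a b, e a b.
Hypothesis nonstar : forall c, (forall k, k != c -> e c k) ->
   (forall a b, e a b -> (a == c) || (b == c)) -> False.

Lemma T2 : 2 <= #|T|.
Proof.
have [a [b hab]] := hedge.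
have ab : a != b by apply/eqP => hab'; rewrite hab' eirr in hab.
by have := max_card [set a; b]; rewrite cards2 ab.
Qed.

Lemma two_contra : #|T| = 2 -> False.
Proof.
move=> h2; have [a [b hab]] := hedge.
have ab : a != b by apply/eqP => hab'; rewrite hab' eirr in hab.
have all2 k : (k == a) || (k == b).
  have : [set a; b] = setT by apply/eqP; rewrite eqEcard subsetT cardsT cards2 ab h2.
  by move/setP/(_ k); rewrite !inE.
apply: (nonstar (c := a)).
  move=> k ka; have := all2 k; rewrite (negbTE ka) /= => /eqP ->; exact: hab.
move=> u v huv; have := all2 u; have := all2 v.
case/orP => /eqP ?; subst; first by rewrite eqxx orbT.
case/orP => /eqP ?; subst; [by rewrite eqxx | by rewrite eirr in huv].
Qed.

Definition F1 x := #|nb E x| = #|T|.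
Definition F2 x := forall a b, E x a -> E x b -> ~~ E a b.
Definition F3 x := forall y, y != x -> ~~ E x y -> (exists z, E x z && E z y) ->
  #|nb E y| = 2 * #|nb E y :&: nb E x|.
Definition F4 x := #|n2 E x| = #|T|.

Lemma dpos i : 0 < #|nbH e i|.
Proof. have [j hj] := noiso i; apply/card_gt0P; exists j; by rewrite inE. Qed.

Lemma caseT i s : nat_of_ord s = t -> F1 (Some (i,s)) -> F3 (Some (i,s)) -> False.
Proof.
move=> st h1 h3.
move: h1; rewrite /F1 cardS st eqxx Rs_t // muln1 => h1.
have nbi : nbH e i = ~: [set i].
  apply/eqP; rewrite eqEcard cardsC1; apply/andP; split; last by move: h1 => /= ; lia.
  by apply/subsetP => k; rewrite !inE; apply: contraTneq => ->; rewrite eirr.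
have hi k : k != i -> e i k by move=> ki; move: (ki); rewrite -in_setC1 -nbi inE.
have dk1 k : k != i -> #|nbH e k| = 1.
  move=> ki.
  have ne : Some (k, s) != Some (i, s) by apply/negP => /eqP [] /eqP; rewrite (negbTE ki).
  have nE : ~~ E (Some (i, s)) (Some (k, s)) by rewrite E_SS /Rrel st; apply/negP; lia.
  have ex : exists z, E (Some (i, s)) z && E z (Some (k, s)) by exists None; rewrite /= st eqxx.
  have := h3 _ ne nE ex; rewrite cardS cardSS st eqxx Rs_t // Rs_tt //.
  have ck : #|nbH e k :&: nbH e i| = #|nbH e k| - 1.
    rewrite nbi -setDE (cardsD1 i (nbH e k)) inE esym hi //; lia.
  rewrite ck => h; have := dpos k; move: h => /=; lia.
apply: (nonstar (c := i)) => // u v huv.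
case: (eqVneq u i) => [//|ui].
have := dk1 u ui; move/eqP/cards1P => [x hx].
have : v \in nbH e u by rewrite inE.
have : i \in nbH e u by rewrite inE esym hi.
by rewrite hx !inE => /eqP -> /eqP ->; rewrite eqxx orbT.
Qed.

Lemma eqSome (x y : T * 'I_t.+1) : ((Some x : V) == Some y) = (x == y).
Proof. by []. Qed.

Lemma neS (i k : T) (s q : 'I_t.+1) : (Some (i, q) : V) != Some (k, s) -> i = k -> nat_of_ord q != s.
Proof.
move=> ne ik; subst; apply: contra ne => /eqP qs; apply/eqP.
by congr (Some (_,_)); apply: val_inj.
Qed.

Lemma case0 i s : nat_of_ord s = 0 -> F1 (Some (i,s)) -> F2 (Some (i,s)) ->
  F3 (Some (i,s)) -> F4 (Some (i,s)) -> False.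
Proof.
move=> s0 h1 h2 h3 h4.
have st : nat_of_ord s < t by lia.
move: h1; rewrite /F1 cardS Rs_lt // s0 => h1.
have hdi := dpos i.
have fin : #|n2 E (Some (i,s))| <= 3 -> False.
  by rewrite h4 => h; apply: two_contra; move: h1 h h4 => /=; lia.
have ind j k : e i j -> e i k -> ~~ e j k.
  move=> hj hk; have := h2 (Some (j,s)) (Some (k,s)).
  by rewrite !E_SS /Rrel s0 hj hk /= andbT; apply.
have [j hj] := noiso i.
have [ht|ht] : t = 1 \/ 2 <= t by lia.
  have ne : Some (i, @ord_max t) != Some (i, s).
    by apply/negP => /eqP [] /(congr1 val) /=; lia.
  have nE : ~~ E (Some (i, s)) (Some (i, @ord_max t)) by rewrite E_SS eirr.
  have ex : exists z, E (Some (i, s)) z && E z (Some (i, @ord_max t)).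
    by exists (Some (j,s)); rewrite !E_SS hj esym hj /Rrel s0 /=; lia.
  have := h3 _ ne nE ex; rewrite cardS cardSS setIid /= s0 Rs_t // Rs_t0 //.
  rewrite eqxx ht /= => h; apply: two_contra; move: h1; rewrite ht /=; lia.
have cA j' k : e i j' -> e j' k -> k = i.
  move=> hj' hk; apply/eqP/negP => /negP ki.
  have nik : ~~ e i k by apply/negP => hik; have := ind _ _ hj' hik; rewrite hk.
  have ck : 0 < #|nbH e k :&: nbH e i|.
    by apply/card_gt0P; exists j'; rewrite !inE esym hk hj'.
  have ne1 : Some (k, s) != Some (i, s).
    by apply/negP => /eqP [] /eqP; rewrite (negbTE ki).
  have nE1 : ~~ E (Some (i, s)) (Some (k, s)) by rewrite E_SS (negbTE nik).
  have ex1 : exists z, E (Some (i, s)) z && E z (Some (k, s)).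
    by exists (Some (j',s)); rewrite !E_SS hj' hk /Rrel s0.
  have := h3 _ ne1 nE1 ex1; rewrite cardS cardSS setIid Rs_lt // s0 /=.
  have ne2 : Some (k, inord 1) != Some (i, s).
    by apply/negP => /eqP [] /eqP; rewrite (negbTE ki).
  have nE2 : ~~ E (Some (i, s)) (Some (k, inord 1)) by rewrite E_SS (negbTE nik).
  have ex2 : exists z, E (Some (i, s)) z && E z (Some (k, inord 1)).
    by exists (Some (j',s)); rewrite !E_SS hj' hk /Rrel s0 inordK //; lia.
  have := h3 _ ne2 nE2 ex2; rewrite cardS cardSS inordK ?Rs_lt // ?s0 ?Rs_10 /=; try lia.
apply: fin.
apply: leq_trans (card3 None (Some (i, inord 1)) (Some (i, inord 2))).
apply: subset_leq_card; apply/subsetP => y.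
rewrite inE => /andP [/andP [ny nE] /existsP [z /andP [hxz hzy]]].
case: z hxz hzy => [[j' r]|]; last by rewrite /= s0 => /eqP h0; exfalso; lia.
rewrite E_SS => /andP [hij hR1].
case: y ny nE => [[k q]|] ny _; last by rewrite !inE eqxx.
rewrite E_SS => /andP [hjk hR2]; have ki := cA _ _ hij hjk; subst k.
have := neS ny erefl.
rewrite !inE /= !eqSome !xpair_eqE eqxx /= !eq_inord; try lia.
by move: hR1 hR2; rewrite /Rrel s0; lia.
Qed.

Lemma case1 i s : 1 <= nat_of_ord s < t -> F1 (Some (i,s)) -> F2 (Some (i,s)) ->
  F3 (Some (i,s)) -> F4 (Some (i,s)) -> False.
Proof.
move=> /andP [s1 st] h1 h2 h3 h4.
move: h1; rewrite /F1 cardS Rs_lt // => h1.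
have sne : (nat_of_ord s == t) = false by apply/negP => /eqP; lia.
rewrite sne /= in h1.
have hdi := dpos i.
have fin : #|n2 E (Some (i,s))| <= 3 -> False.
  by rewrite h4 => h; apply: two_contra; move: h1 h h4 => /=; lia.
have cA j k : e i j -> e j k -> k = i.
  move=> hj hk; apply/eqP/negP => /negP ki.
  have ck : 0 < #|nbH e k :&: nbH e i|.
    by apply/card_gt0P; exists j; rewrite !inE esym hk hj.
  have ne1 : Some (k, s) != Some (i, s).
    by apply/negP => /eqP [] /eqP; rewrite (negbTE ki).
  have nE1 : ~~ E (Some (i, s)) (Some (k, s)) by rewrite E_SS /Rrel; apply/negP; lia.
  have ex1 : exists z, E (Some (i, s)) z && E z (Some (k, s)).
    by exists (Some (j, inord s.+1)); rewrite !E_SS hj hk /Rrel inordK //; lia.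
  have := h3 _ ne1 nE1 ex1; rewrite cardS cardSS setIid Rs_lt // sne /=.
  have [hik|nik] := boolP (e i k && (nat_of_ord s == 1)).
    case/andP: hik => hik /eqP s1'.
    have := h2 (Some (j, inord 0)) (Some (k, inord 0)).
    by rewrite !E_SS hj hik hk /Rrel !inordK //= s1'; lia.
  have ne2 : Some (k, inord (s - 2)) != Some (i, s).
    by apply/negP => /eqP [] /eqP; rewrite (negbTE ki).
  have nE2 : ~~ E (Some (i, s)) (Some (k, inord (s - 2))).
    rewrite E_SS /Rrel inordK; last by lia.
    by move: nik; case: (e i k) => //=; lia.
  have ex2 : exists z, E (Some (i, s)) z && E z (Some (k, inord (s - 2))).
    by exists (Some (j, inord s.-1)); rewrite !E_SS hj hk /Rrel !inordK //; lia.
  have := h3 _ ne2 nE2 ex2; rewrite cardS cardSS inordK; last by lia.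
  rewrite (Rs_lt t1); last by lia.
  rewrite (Rs_m2 t1); last by lia.
  have -> : (s - 2 == t) = false by apply/negP => /eqP; lia.
  rewrite /=; lia.
apply: fin.
apply: leq_trans (card3 None (Some (i, inord (s + 2))) (Some (i, inord (s - 2)))).
apply: subset_leq_card; apply/subsetP => y.
rewrite inE => /andP [/andP [ny nE] /existsP [z /andP [hxz hzy]]].
case: z hxz hzy => [[j' r]|]; last by rewrite /= sne.
rewrite E_SS => /andP [hij hR1].
case: y ny nE => [[k q]|] ny _; last by rewrite !inE eqxx.
rewrite E_SS => /andP [hjk hR2]; have ki := cA _ _ hij hjk; subst k.
have := neS ny erefl.
have qt := ltn_ord q.
rewrite !inE /= !eqSome !xpair_eqE eqxx /=.
move: hR1 hR2; rewrite /Rrel => hR1 hR2 qs.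
have [q2|q2] : nat_of_ord q = s + 2 \/ nat_of_ord q = s - 2 by lia.
  by rewrite eq_inord ?q2 ?eqxx //; lia.
by rewrite (eq_inord q (_ : s - 2 < t.+1)) ?q2 ?eqxx ?orbT //; lia.
Qed.

Lemma fixw (f : {perm V}) : (forall a b, E (f a) (f b) = E a b) -> f None = None.
Proof.
move=> fE; case hx: (f None) => [[i s]|] //; exfalso.
have h1 : F1 (Some (i,s)) by rewrite /F1 -hx card_nbf // w1.
have h2 : F2 (Some (i,s)).
  move=> a b; rewrite -hx -(permKV f a) -(permKV f b) !fE; exact: w2.
have h3 : F3 (Some (i,s)).
  move=> y; rewrite -hx -(permKV f y) (inj_eq perm_inj) fE => ny nE [z hz].
  rewrite card_nbf // card_nbIf //; apply: w3 => //.
  exists (f^-1%g z); rewrite -fE -(fE (f^-1%g z)) !permKV; by rewrite permKV in hz.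
have h4 : F4 (Some (i,s)) by rewrite /F4 -hx card_n2f // w4.
have [st|st] := eqVneq (nat_of_ord s) t; first exact: (caseT st h1 h3).
have slt : nat_of_ord s < t by have := ltn_ord s; lia.
have [s0|s1] := eqVneq (nat_of_ord s) 0; first exact: (case0 s0 h1 h2 h3 h4).
apply: (case1 _ h1 h2 h3 h4); lia.
Qed.

End Fix.


Lemma autP (X : finType) (E : rel X) (f : {perm X}) :
  is_aut E f = [forall x, forall y, E (f x) (f y) == E x y].
Proof. by []. Qed.

Lemma autE (X : finType) (E : rel X) (f : {perm X}) :
  is_aut E f -> forall a b, E (f a) (f b) = E a b.
Proof. by move=> /forallP h a b; have /forallP /(_ b) /eqP := h a. Qed.

Lemma autI (X : finType) (E : rel X) (f : {perm X}) :
  (forall a b, E (f a) (f b) = E a b) -> is_aut E f.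
Proof. by move=> h; apply/forallP => a; apply/forallP => b; rewrite h. Qed.

Section Pend.
Variables (T : finType) (e : rel T) (t l : nat).
Local Notation V := (option (T * 'I_t.+1)).
Local Notation W := (V + 'I_l)%type.
Local Notation E := (myc_rel e t).
Local Notation E' := (myc_pendant_rel e t l).
Hypothesis t1 : 1 <= t.
Hypothesis l1 : 1 <= l.
Hypothesis esym : symmetric e.
Hypothesis eirr : irreflexive e.
Hypothesis noiso : forall x, exists y, e x y.
Hypothesis hedge : exists a b, e a b.

Definition isl (x : W) : bool := if x is inl _ then true else false.

Lemma degr j : #|nb E' (inr j)| = 1.
Proof.
rewrite -(cards1 (inl None : W)); apply: eq_card => -[a|k]; rewrite !inE //=.
Qed.

Lemma degl a : 1 < #|nb E' (inl a)|.
Proof.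
apply/card_gt1P.
case: a => [[i s]|].
  have [j hj] := noiso i.
  have [st|st] := eqVneq (nat_of_ord s) t.
    exists (inl None), (inl (Some (j, inord t.-1))); rewrite !inE /= st eqxx; split => //.
    by rewrite hj /= inordK; lia.
  have slt : nat_of_ord s < t by have := ltn_ord s; lia.
  exists (inl (Some (j, inord s.+1))), (inl (Some (j, inord s.-1))); rewrite !inE /=.
  rewrite hj !inordK; try lia; split; try lia.
  apply/negP => /eqP [] /(congr1 val) /=; rewrite !inordK; lia.
have [a [b hab]] := hedge.
have j0 : 'I_l by exists 0.
exists (inr j0), (inl (Some (a, @ord_max t))); rewrite !inE /=; split => //.
Qed.

Lemma sides (g : {perm W}) : (forall a b, E' (g a) (g b) = E' a b) ->
  forall x, isl (g x) = isl x.
Proof.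
move=> gE x; have := card_nbf gE x.
case: x => [a|j]; case: (g _) => [b|k] //=.
  by rewrite degr => h; have := degl a; rewrite -h.
by rewrite degr => h; have := degl b; rewrite h.
Qed.

Section Restr.
Variable g : {perm W}.
Hypothesis gE : forall a b, E' (g a) (g b) = E' a b.
Definition rfun (a : V) : V := if g (inl a) is inl b then b else a.
Lemma rfunE a : g (inl a) = inl (rfun a).
Proof.
rewrite /rfun; have := sides gE (inl a); by case: (g (inl a)).
Qed.
Lemma rfun_inj : injective rfun.
Proof. move=> a b h; apply: (@inl_inj _ 'I_l); apply: (@perm_inj _ g); by rewrite !rfunE h. Qed.
Definition rp := perm rfun_inj.
Lemma rpE a : g (inl a) = inl (rp a).
Proof. by rewrite permE rfunE. Qed.
Lemma rp_aut a b : E (rp a) (rp b) = E a b.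
Proof. by have := gE (inl a) (inl b); rewrite !rpE. Qed.
End Restr.

Section Ext.
Variable h : {perm V}.
Hypothesis hE : forall a b, E (h a) (h b) = E a b.
Hypothesis hN : h None = None.
Definition xfun (x : W) : W := match x with inl a => inl (h a) | inr j => inr j end.
Lemma xfun_inj : injective xfun.
Proof.
move=> [a|j] [b|k] //= [].
by move=> /perm_inj ->.
Qed.
Definition xp := perm xfun_inj.
Lemma xpE x : xp x = xfun x.
Proof. by rewrite permE. Qed.
Lemma xp_aut x y : E' (xp x) (xp y) = E' x y.
Proof.
have hNe a : (h a == None) = (a == None).
  by rewrite -{1}hN (inj_eq perm_inj).
by rewrite !xpE; case: x => [a|j]; case: y => [b|k] //=; rewrite hNe.
Qed.
End Ext.

Lemma swap_aut (j1 j2 : 'I_l) x y :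
  E' (tperm (inr j1 : W) (inr j2) x) (tperm (inr j1 : W) (inr j2) y) = E' x y.
Proof.
have tl a : tperm (inr j1 : W) (inr j2) (inl a) = inl a by rewrite tpermD.
have tr j : exists k, tperm (inr j1 : W) (inr j2) (inr j) = inr k.
  by case: tpermP => *; eexists; reflexivity.
case: x => [a|j]; case: y => [b|k]; rewrite ?tl //.
- by have [k' ->] := tr k.
- by have [j' ->] := tr j.
- by have [j' ->] := tr j; have [k' ->] := tr k.
Qed.

End Pend.

Unset Implicit Arguments.

Theorem mainTheorem10 (T : finType) (e : rel T) (t l : nat) :
  simple_graph e ->
  (exists x y, e x y) ->
  (forall x, exists y, e x y) ->
  (forall m, 1 <= m -> ~ isomorphic e (star_rel m)) ->
  1 <= t -> 1 <= l ->
  det_num (myc_pendant_rel e t l) = det_num (myc_rel e t) + l - 1.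
Proof.
move=> [esym eirr] hedge noiso hstar t1 l1.
have nonstar c : (forall k, k != c -> e c k) ->
    (forall a b, e a b -> (a == c) || (b == c)) -> False.
  move=> hc hs; have h2 := T2 eirr hedge.
  by apply: (hstar (#|T|.-1)); [lia | exact: star_iso eirr esym hc hs h2].
have fixw' := fixw t1 esym eirr noiso hedge nonstar.
rewrite /det_num; case: ex_minnP => DC PDC minDC; case: ex_minnP => D PD minD.
apply/eqP; rewrite eqn_leq; apply/andP; split.
  apply: minDC.
  move/existsP: PD => [S /andP [/eqP cS dS]].
  pose j0 : 'I_l := Ordinal l1.
  pose S' : {set (option (T * 'I_t.+1) + 'I_l)} := inl @: S :|: inr @: [set~ j0].
  apply/existsP; exists S'; apply/andP; split.
    rewrite cardsU !card_imset; try (by move=> ? ? []).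
    have -> : inl @: S :&: inr @: [set~ j0] = set0.
      apply/setP => x; rewrite !inE; apply/negP => /andP [/imsetP [a _ ->] /imsetP [j _]] //.
    by rewrite cards0 cardsC1 card_ord cS; lia.
  apply/forallP => g; apply/implyP => /andP [ga /forallP fx].
  have gE := autE ga.
  pose r := rp t1 l1 noiso hedge gE.
  have rpE' : forall a, g (inl a) = inl (r a) := rpE t1 l1 noiso hedge gE.
  have rp1 : r = 1%g.
    move/forallP: dS => /(_ r) /implyP H; apply/eqP; apply: H; rewrite (autI (rp_aut t1 l1 noiso hedge gE)) /=.
    apply/forallP => a; apply/implyP => aS.
    have := fx (inl a); rewrite rpE' => /implyP; rewrite inE mem_imset ?aS //=; last by move=> ? ? [].
    by move=> /(_ isT) /eqP [] ->.
  have gl a : g (inl a) = inl a by rewrite rpE' rp1 perm1.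
  have gr j : g (inr j) = inr j.
    have := sides t1 l1 noiso hedge gE (inr j); case hg: (g (inr j)) => [b|k] // _.
    have inS k' : k' != j0 -> inr k' \in S'.
      by move=> kj; rewrite inE; apply/orP; right; apply/imsetP; exists k'; rewrite ?inE.
    case: (eqVneq j j0) => [ej|jj0].
      case: (eqVneq k j0) => [->|kj0]; first by rewrite ej.
      have := fx (inr k); rewrite inS // => /eqP gk.
      by move: kj0; rewrite -ej; rewrite -gk in hg; move/perm_inj: hg => [] ->; rewrite eqxx.
    by have := fx (inr j); rewrite inS // hg => /eqP.
  by apply/eqP/permP => x; rewrite perm1; case: x => [a|j]; [exact: gl | exact: gr].
move/existsP: PDC => [S' /andP [/eqP cS' dS']].
pose S := [set a | inl a \in S'].
pose J := [set j | inr j \in S'].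
have eS' : S' = inl @: S :|: inr @: J.
  apply/setP => x; rewrite inE; case: x => [a|j]; apply/idP/idP.
  - by move=> h; apply/orP; left; apply/imsetP; exists a; rewrite ?inE.
  - case/orP => /imsetP [a' ha' eq]; last by case: eq.
    by case: eq => ->; rewrite inE in ha'.
  - by move=> h; apply/orP; right; apply/imsetP; exists j; rewrite ?inE.
  - case/orP => /imsetP [a' ha' eq]; first by case: eq.
    by case: eq => ->; rewrite inE in ha'.
have cS'' : #|S'| = #|S| + #|J|.
  rewrite eS' cardsU !card_imset; try (by move=> ? ? []).
  have -> : inl @: S :&: inr @: J = set0.
    apply/setP => x; rewrite !inE; apply/negP => /andP [/imsetP [a _ ->] /imsetP [j _]] //.
  by rewrite cards0 subn0.
have hD : D <= #|S|.
  apply: minD; apply/existsP; exists S; rewrite eqxx /=.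
  apply/forallP => h; apply/implyP => /andP [ha /forallP fx].
  have hE := autE ha; have hN := fixw' _ hE.
  have g1 : xp l h = 1%g.
    move/forallP: dS' => /(_ (xp l h)) /implyP H; apply/eqP; apply: H; rewrite (autI (xp_aut hE hN)) /=.
    apply/forallP => x; apply/implyP; case: x => [a|j] xS; rewrite xpE //=.
    by have := fx a; rewrite inE xS => /eqP ->.
  apply/eqP/permP => a; rewrite perm1.
  by have := congr1 (fun p : {perm _} => p (inl a)) g1; rewrite xpE perm1 /= => -[].
have hJ : l - 1 <= #|J|.
  rewrite leqNgt; apply/negP => hlt.
  have : 1 < #|~: J| by have := cardsC J; rewrite card_ord; lia.
  case/card_gt1P => j1 [j2 [hj1 hj2 j12]].
  move: hj1 hj2; rewrite !inE => hj1 hj2.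
  move/forallP: dS' => /(_ (tperm (inr j1 : option (T * 'I_t.+1) + 'I_l) (inr j2))) /implyP.
  have ta : is_aut (myc_pendant_rel e t l) (tperm (inr j1 : option (T * 'I_t.+1) + 'I_l) (inr j2)).
    by apply: autI => a b; apply: swap_aut.
  rewrite ta /= => H.
  have : tperm (inr j1 : option (T * 'I_t.+1) + 'I_l) (inr j2) == 1%g.
    apply: H; apply/forallP => x; apply/implyP => xS; apply/eqP.
    case: x xS => [a|j] xS; first by rewrite tpermD.
    by rewrite tpermD //; apply/negP => /eqP [] e1; [move: hj1 | move: hj2]; rewrite e1 xS.
  move/eqP/permP/(_ (inr j1)); rewrite tpermL perm1 => -[] /eqP; by rewrite eq_sym (negbTE j12).
rewrite -cS' cS''; lia.
Qed.
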